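(* Let $p$ be an odd prime, $M$ a Bousfield module and $x\in M$. There is some $k\ge1$ such that $\Phi_nx\equiv0\pmod p$ (i.e. $\Phi_nx\in p\,Rx$) for all $n\ge p^k(p-1)$.
   Context: $\mathbb{Z}_{(p)}$ denotes the $p$-local integers. Let $R=\mathbb{Z}_{(p)}[\mathbb{Z}_{(p)}^\times]$ be the group ring of the units of $\mathbb{Z}_{(p)}$, writing $\Psi^j\in R$ for $j\in\mathbb{Z}_{(p)}^\times$. Fix an integer $q$ primitive modulo $p^2$; put $q_i=q^{(-1)^i\lfloor i/2\rfloor}$, $\Theta_n(X)=\prod_{i=1}^n(X-q_i)$ and $\Phi_n=\Theta_n(\Psi^q)\in R$. A Bousfield module is an $R$-module $M$ such that for each $x\in M$: (a) $Rx$ is finitely generated over $\mathbb{Z}_{(p)}$; (b) for each $j\in\mathbb{Z}_{(p)}^\times$, $\Psi^j$ acts on $Rx\otimes\mathbb{Q}$ by a diagonalisable matrix whose eigenvalues are integer powers of $j$; (c) for each $m\ge1$ the action of $\mathbb{Z}_{(p)}^\times$ on $Rx/p^mRx$ factors through $\mathbb{Z}_{(p)}^\times\to(\mathbb{Z}/p^k\mathbb{Z})^\times$ for sufficiently large $k$. *)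

(* Defs.v *)
From HB Require Import structures.
From mathcomp Require Import all_boot all_order all_algebra.
Set Implicit Arguments. Unset Strict Implicit. Unset Printing Implicit Defensive.
Import Order.TTheory GRing.Theory Num.Theory.
Local Open Scope ring_scope.

Lemma den_dvd (r : rat) (d : int) : r * d%:~R \is a Num.int -> (denq r %| d)%Z.
Proof.
move=> /numqK Hc; set c := numq _ in Hc.
have E : (numq r * d)%:~R = (c * denq r)%:~R :> rat.
  by rewrite !intrM Hc numqE mulrAC.
have E' : numq r * d = c * denq r by apply: (intr_inj E).
have cop : coprimez (denq r) (numq r) by rewrite coprimez_sym coprimezE coprime_num_den.
by rewrite -(Gauss_dvdzr _ cop) E' dvdz_mull.
Qed.

Definition plocal (p : nat) : pred rat := fun r => coprime p `|denq r|%N.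

Lemma plocal_dvd p r (d : int) : (denq r %| d)%Z -> coprime p `|d|%N -> plocal p r.
Proof. by move=> H1 H2; apply: coprime_dvdr H2. Qed.

Lemma mulden_int (x : rat) : x * (denq x)%:~R \is a Num.int.
Proof. by rewrite -numqE intr_int. Qed.

Fact plocal_subring p : subring_closed (plocal p).
Proof.
split; first exact: coprimen1.
- move=> x y Hx Hy; apply: (@plocal_dvd _ _ (denq x * denq y)).
    apply: den_dvd; rewrite intrM mulrBl.
    apply: rpredB; first by rewrite mulrA rpredM ?mulden_int ?intr_int.
    by rewrite mulrCA rpredM ?mulden_int ?intr_int.
  by rewrite abszM coprimeMr; apply/andP; split.
- move=> x y Hx Hy; apply: (@plocal_dvd _ _ (denq x * denq y)).
    apply: den_dvd; rewrite intrM mulrACA.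
    by rewrite rpredM ?mulden_int.
  by rewrite abszM coprimeMr; apply/andP; split.
Qed.

HB.instance Definition _ p := GRing.isSubringClosed.Build rat (plocal p) (plocal_subring p).

Record Zloc (p : nat) := ZLoc { zval : rat; zvalP : plocal p zval }.
HB.instance Definition _ p := [isSub for @zval p].
HB.instance Definition _ p := [Choice of Zloc p by <:].
HB.instance Definition _ p := [SubChoice_isSubComNzRing of Zloc p by <:].

Section Units.
Variable p : nat.
Implicit Types x y : Zloc p.

Definition zunit : {pred Zloc p} :=
  fun x => (zval x != 0) && coprime p `|numq (zval x)|%N.

Lemma plocalV (r : rat) : r != 0 -> coprime p `|numq r|%N -> plocal p r^-1.
Proof.
move=> r0 Hn; apply: (@plocal_dvd _ _ (numq r)) => //; apply: den_dvd.
by rewrite numqE mulrA mulVf // mul1r intr_int.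
Qed.

Definition zinv x : Zloc p :=
  if zunit x then insubd x (zval x)^-1 else x.

Lemma zmulVx : {in zunit, left_inverse 1 zinv *%R}.
Proof.
move=> x /[dup] Ux /andP[x0 Hn]; rewrite /zinv (_ : zunit x = true) //; apply: val_inj.
by rewrite /= insubdK ?mulVf //; apply: plocalV.
Qed.

Lemma zunitPl x y : y * x = 1 -> zunit x.
Proof.
move=> /(congr1 (@zval p)) /= Hyx.
have x0 : zval x != 0 by apply/eqP=> x0; move: Hyx; rewrite x0 mulr0 => /eqP; rewrite eq_sym oner_eq0.
rewrite /zunit x0 /=.
have E : (numq (zval y) * numq (zval x))%:~R = (denq (zval y) * denq (zval x))%:~R :> rat.
  by rewrite !intrM !numqE mulrACA Hyx mul1r.
have E' := congr1 absz (intr_inj E); rewrite !abszM in E'.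
have : coprime p (`|denq (zval y)| * `|denq (zval x)|)%N.
  by rewrite coprimeMr; apply/andP; split; apply: zvalP.
by rewrite -E' coprimeMr => /andP[_ ->].
Qed.

Lemma zinv_out : {in [predC zunit], zinv =1 id}.
Proof. by move=> x; rewrite inE /zinv /= => /negbTE H; rewrite [zunit x]H. Qed.

End Units.

HB.instance Definition _ p := GRing.ComNzRing_hasMulInverse.Build (Zloc p)
  (@zmulVx p) (@zunitPl p) (@zinv_out p).


(* Z_(p) is [Zloc p] (rationals with denominator prime to p); it is a  *)
(* comUnitRingType whose units are exactly Z_(p)^x.  An R-module, for  *)
(* R = Z_(p)[Z_(p)^x], is a Z_(p)-module [M] with an action [Psi j]    *)
(* (j a unit of Z_(p)) of the group Z_(p)^x by Z_(p)-linear maps;      *)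
(* the values of [Psi] at non-units are irrelevant (never used).       *)

Definition Rmodule_action (p : nat) (M : lmodType (Zloc p))
    (Psi : Zloc p -> M -> M) : Prop :=
  [/\ forall j : Zloc p, j \is a GRing.unit ->
        forall (a : Zloc p) (y z : M), Psi j (a *: y + z) = a *: Psi j y + Psi j z,
      forall y : M, Psi 1 y = y &
      forall j k : Zloc p, j \is a GRing.unit -> k \is a GRing.unit ->
        forall y : M, Psi (j * k) y = Psi j (Psi k y)].

(* y \in R x : y = sum_i a_i Psi^{j_i} x, a_i in Z_(p), j_i in Z_(p)^x *)
Definition Rgen (p : nat) (M : lmodType (Zloc p)) (Psi : Zloc p -> M -> M)
    (x y : M) : Prop :=
  exists s : seq (Zloc p * Zloc p),
    all (fun c => c.2 \is a GRing.unit) s /\ y = \sum_(c <- s) c.1 *: Psi c.2 x.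

(* y is a torsion element, i.e. y (x) 1 = 0 in M (x) Q *)
Definition torsion (p : nat) (M : lmodType (Zloc p)) (y : M) : Prop :=
  exists n : nat, (0 < n)%N /\ y *+ n = 0.

Definition fg_Rx (p : nat) (M : lmodType (Zloc p)) (Psi : Zloc p -> M -> M)
    (x : M) : Prop :=
  exists gs : seq M, (forall g, g \in gs -> Rgen Psi x g) /\
    forall y, Rgen Psi x y ->
      exists c : 'I_(size gs) -> Zloc p, y = \sum_(i < size gs) c i *: gs`_i.

(* (b) Psi^j acts diagonalisably on R x (x) Q with eigenvalues j^e, e in Z:
   R x (x) Q is spanned (over Q) by eigenvectors z (x) 1 (z in R x) with
   Psi^j (z (x) 1) = j^e (z (x) 1).  Clearing denominators, this says: every
   y in R x has a positive multiple n y which, modulo torsion, is a sum of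
   elements z of R x with Psi^j z - j^e z torsion. *)
Definition diag_Rx (p : nat) (M : lmodType (Zloc p)) (Psi : Zloc p -> M -> M)
    (x : M) (j : Zloc p) : Prop :=
  forall y, Rgen Psi x y ->
    exists n : nat, (0 < n)%N /\
    exists zs : seq (M * int),
      (forall z, z \in zs -> Rgen Psi x z.1 /\ torsion (Psi j z.1 - j ^ z.2 *: z.1))
      /\ torsion (y *+ n - \sum_(z <- zs) z.1).

(* (c) for each m >= 1 the action on R x / p^m R x factors through
   Z_(p)^x -> (Z/p^k)^x for some k *)
Definition factors_Rx (p : nat) (M : lmodType (Zloc p)) (Psi : Zloc p -> M -> M)
    (x : M) : Prop :=
  forall m : nat, (1 <= m)%N -> exists k : nat,
    forall j j' : Zloc p, j \is a GRing.unit -> j' \is a GRing.unit ->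
      (exists c : Zloc p, j - j' = (p ^ k)%:R * c) ->
      forall y, Rgen Psi x y ->
        exists w, Rgen Psi x w /\ Psi j y - Psi j' y = (p ^ m)%:R *: w.

Definition bousfield (p : nat) (M : lmodType (Zloc p)) (Psi : Zloc p -> M -> M)
    : Prop :=
  Rmodule_action Psi /\
  forall x : M,
    [/\ fg_Rx Psi x,
        forall j : Zloc p, j \is a GRing.unit -> diag_Rx Psi x j &
        factors_Rx Psi x].

Definition primitive_mod (q : int) (m : nat) : Prop :=
  coprimez q m /\
  forall k : nat, (0 < k)%N -> (q ^+ k == 1 %[mod m])%Z -> (totient m <= k)%N.

Definition qi (p : nat) (q : int) (i : nat) : Zloc p :=
  (q%:~R : Zloc p) ^ ((-1) ^+ i * (i./2)%:Z).

Fixpoint Phi (p : nat) (M : lmodType (Zloc p)) (Psi : Zloc p -> M -> M)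
    (q : int) (n : nat) (y : M) : M :=
  match n with
  | 0 => y
  | n'.+1 => let z := Phi Psi q n' y in Psi (q%:~R) z - qi p q n'.+1 *: z
  end.

(* Main.v *)
Require Import Defs.
From HB Require Import structures.
From mathcomp Require Import all_boot all_order all_algebra all_field.
From mathcomp Require Import zify ring.
Import Order.TTheory GRing.Theory Num.Theory.
Set Implicit Arguments. Unset Strict Implicit. Unset Printing Implicit Defensive.
Local Open Scope ring_scope.

Section PartA.
Variables (p : nat) (q : int).
Hypothesis pr : prime p.
Hypothesis podd : odd p.
Hypothesis prim : primitive_mod q (p ^ 2).

Lemma Fp_int0 (z : int) : ((z%:~R : 'F_p) == 0) = (p%:Z %| z)%Z.
Proof.
have ch := pchar_Fp pr.
case: z => n.
  by rewrite /= -pmulrn -(dvdn_pcharf ch) dvdzE.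
rewrite NegzE rmorphN /= oppr_eq0 -pmulrn -(dvdn_pcharf ch) dvdzE.
by rewrite abszN.
Qed.

Lemma p_gt1 : (1 < p)%N. Proof. exact: prime_gt1. Qed.

Lemma q_cop : coprime `|q| p.
Proof.
case: prim => c _; move: c; rewrite /coprimez /= => c.
have : coprime `|q| (p ^ 2) by [].
by rewrite coprime_pexpr.
Qed.

Definition g : 'F_p := q%:~R.

Lemma g_neq0 : g != 0.
Proof.
rewrite /g Fp_int0 dvdzE /=; apply/negP => d.
have := q_cop; rewrite /coprime gcdnC (gcdn_idPl d) => /eqP p1.
by move: p_gt1; rewrite p1.
Qed.

Lemma g_fermat : g ^+ (p.-1) = 1.
Proof.
have h := expf_card g; rewrite card_Fp // in h.
have : g * g ^+ p.-1 = g * 1 by rewrite mulr1 -exprS prednK // prime_gt0.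
by move/(mulfI g_neq0).
Qed.

Lemma lift_p (a : int) j : (p%:Z %| a - 1)%Z -> (p%:Z ^+ j %| a - 1)%Z ->
  (p%:Z ^+ j.+1 %| a ^+ p - 1)%Z.
Proof.
move=> h1 hj.
rewrite -(expr1n int p) subrXX exprSr; apply: dvdz_mul => //.
rewrite -Fp_int0 rmorph_sum /=.
have a1 : (a%:~R : 'F_p) = 1.
  by move: h1; rewrite -Fp_int0 rmorphB /= subr_eq0 => /eqP.
under eq_bigr => i _ do rewrite rmorphM /= !rmorphXn /= a1 expr1n mul1r rmorph1 expr1n.
by rewrite sumr_const card_ord; apply/eqP; apply: pchar_Fp_0.
Qed.

Lemma pow_lift j : (p%:Z ^+ j.+1 %| q ^+ (p.-1 * p ^ j) - 1)%Z.
Proof.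
elim: j => [|j IH].
  rewrite expn0 muln1 expr1 -Fp_int0 rmorphB rmorphXn /= -/g g_fermat.
  by rewrite rmorph1 subrr.
rewrite expnSr mulnA exprM; apply: lift_p => //.
by move: IH; rewrite exprS; apply: dvdz_trans; apply: dvdz_mulr.
Qed.

Lemma p_ge3 : (2 < p)%N.
Proof.
have := p_gt1; case: p podd => [|[|[|n]]] //.
Qed.

Lemma g_ord d : (0 < d)%N -> (d < p.-1)%N -> g ^+ d != 1.
Proof.
move=> d0 dlt; apply/negP => /eqP h.
have h1 : (p%:Z %| q ^+ d - 1)%Z.
  by rewrite -Fp_int0 rmorphB rmorphXn /= -/g h rmorph1 subrr.
have h2 : (p%:Z ^+ 2 %| (q ^+ d) ^+ p - 1)%Z by apply: lift_p => //; rewrite expr1.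
case: prim => _ /(_ (d * p)%N).
have -> : (0 < d * p)%N by rewrite muln_gt0 d0 prime_gt0.
move=> /(_ isT).
rewrite eqz_mod_dvd exprM.
have -> : Posz (p ^ 2)%N = p%:Z ^+ 2 by rewrite expnS expn1 PoszM expr2.
move=> /(_ h2); rewrite totient_pfactor // expn1 leq_pmul2r ?prime_gt0 //.
by rewrite leqNgt dlt.
Qed.

Definition Q (M : nat) : {poly 'F_p} := \prod_(0 <= i < M) ('X - (g ^+ i.+1)%:P).

Lemma Qadd n m : Q (n + m) = Q n * \prod_(0 <= i < m) ('X - (g ^+ (i + n).+1)%:P).
Proof.
elim: m => [|m IH]; first by rewrite addn0 big_geq // mulr1.
by rewrite addnS /Q big_nat_recr //= -/(Q _) IH big_nat_recr //= mulrA addnC.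
Qed.

Lemma Q0 : Q 0 = 1.
Proof. by rewrite /Q big_geq. Qed.

Lemma Qper a : Q (a * p.-1) = Q p.-1 ^+ a.
Proof.
elim: a => [|a IH]; first by rewrite mul0n Q0 expr0.
rewrite mulSnr Qadd IH exprSr; congr (_ * _).
apply: eq_bigr => i _.
by rewrite -addSn exprD [(a * _)%N]mulnC exprM g_fermat expr1n mulr1.
Qed.

Lemma Q1 : Q p.-1 = 'X^(p.-1) - 1.
Proof.
have pm1 : (0 < p.-1)%N by rewrite -ltnS prednK ?prime_gt0 // ltnW // p_ge3.
set rs := [seq g ^+ i.+1 | i <- iota 0 p.-1].
have Hr : all (root ('X^(p.-1) - 1)) rs.
  apply/allP => z /mapP [i _ ->].
  by rewrite rootE !hornerE -exprM mulnC exprM g_fermat expr1n subrr.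
have Hu : uniq_roots rs.
  rewrite uniq_rootsE map_inj_in_uniq ?iota_uniq // => a b.
  rewrite !mem_iota !add0n => ha hb eq.
  have key : forall a b, (a < b < p.-1)%N -> g ^+ a.+1 = g ^+ b.+1 -> False.
    move=> a' b' /andP[hab hb'] e.
    have : g ^+ a'.+1 * g ^+ (b' - a') = g ^+ a'.+1 * 1.
      by rewrite -exprD addSn (subnKC (ltnW hab)) mulr1 e.
    move/(mulfI (expf_neq0 _ g_neq0))/eqP; apply/negP; apply: g_ord.
      by rewrite subn_gt0.
    by apply: leq_ltn_trans hb'; apply: leq_subr.
  case: (ltngtP a b) => // hab.
    by exfalso; apply: (key a b) => //; rewrite hab hb.
  by exfalso; apply: (key b a) => //; rewrite hab ha.
have [Qp HQ] := uniq_roots_prod_XsubC Hr Hu.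
have Pn0 : ('X^(p.-1) - 1 : {poly 'F_p}) != 0.
  by rewrite -size_poly_eq0 -polyC1 size_XnsubC.
have Qn0 : Qp != 0 by apply: contraNneq Pn0 => e; rewrite HQ e mul0r.
have prn0 : \prod_(z <- rs) ('X - z%:P) != 0.
  by apply: monic_neq0; apply: monic_prod_XsubC.
have sQ : size Qp = 1%N.
  have := congr1 (fun r : {poly 'F_p} => size r) HQ; rewrite /=; rewrite size_mul // -polyC1 size_XnsubC //.
  rewrite size_prod_XsubC size_map size_iota.
  rewrite addnS /= => /eqP; rewrite -[X in X == _]add1n eqn_add2r => /eqP.
  by [].
have Qc : Qp = (Qp`_0)%:P by apply: size1_polyC; rewrite sQ.
have lc := congr1 lead_coef HQ.
rewrite lead_coefM (monicP (monic_prod_XsubC _ _ _)) mulr1 -polyC1 (monicP (monicXnsubC _ pm1)) in lc.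
rewrite /Q big_map in HQ.
have Q1 : Qp = 1 by rewrite Qc -polyC1 lc /lead_coef sQ.
move: HQ; rewrite Q1 mul1r => ->.
by rewrite /Q /index_iota subn0.
Qed.

Lemma QN K : Q (p ^ K * p.-1) = 'X^(p ^ K * p.-1) - 1.
Proof.
rewrite Qper Q1.
have ch : p \in [char {poly 'F_p}] by rewrite pchar_poly; exact: pchar_Fp.
rewrite exprDn_pchar; last by rewrite (eq_pnat _ (pcharf_eq ch)) pnatX pnat_id.
rewrite -exprM mulnC -signr_odd oddX podd orbT.
by [].
Qed.

Definition ee (i : nat) : nat := if odd i then (i./2 * (p - 2))%N else i./2.

Fixpoint Pint (n : nat) : {poly int} :=
  match n with 0 => 1 | n'.+1 => ('X - (q ^+ ee n'.+1)%:P) * Pint n' end.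

Definition Pb n : {poly 'F_p} := map_poly (intr : int -> 'F_p) (Pint n).

Lemma PbS n : Pb n.+1 = ('X - (g ^+ ee n.+1)%:P) * Pb n.
Proof. by rewrite /Pb /= rmorphM rmorphB /= map_polyX map_polyC /= rmorphXn. Qed.

Lemma Q_dvd_Pb n : Q n./2 %| Pb n.
Proof.
elim: n => [|n IH]; first by rewrite Q0 dvd1p.
rewrite PbS /ee /= uphalf_half.
case: (boolP (odd n)) => on /=.
  rewrite add1n /Q big_nat_recr //= -/(Q _) mulrC.
  by apply: dvdp_mul.
by rewrite add0n; apply: dvdp_mull.
Qed.

Lemma partA K n : (p ^ K.+1 * (p - 1) <= n)%N ->
  exists A : {poly int}, forall i,
    (p%:Z %| (Pint n - A * ('X^(p ^ K * (p - 1)) - 1))`_i)%Z.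
Proof.
rewrite subn1 => hn.
set N := (p ^ K * p.-1)%N.
have hN : (N <= n./2)%N.
  rewrite -(doubleK N); apply: half_leq; apply: leq_trans hn.
  rewrite expnS -mulnA /N -muln2 mulnC leq_pmul2r //.
    by apply: ltnW; apply: p_ge3.
  by rewrite muln_gt0 expn_gt0 prime_gt0 //= -ltnS prednK ?prime_gt0 // ltnW // p_ge3.
have dv : ('X^N - 1) %| Pb n.
  rewrite -QN; apply: dvdp_trans (Q_dvd_Pb n).
  by rewrite -(subnKC hN) Qadd dvdp_mulIl.
have [Ab HAb] := dvdpP _ _ dv.
exists (\poly_(i < size Ab) (nat_of_ord (Ab`_i))%:Z).
move=> i; rewrite -Fp_int0.
rewrite -(coef_map (intr : int -> 'F_p)) rmorphB rmorphM rmorphB /= map_polyXn rmorph1 -/(Pb n) HAb.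
have -> : map_poly (intr : int -> 'F_p) (\poly_(i < size Ab) (nat_of_ord (Ab`_i))%:Z) = Ab.
  apply/polyP => j; rewrite coef_map coef_poly /=.
  case: ifP => hj; last by rewrite nth_default // leqNgt hj.
  by rewrite -pmulrn natr_Zp.
by rewrite subrr coef0.
Qed.

End PartA.
Lemma zunitE p (x : Zloc p) : (x \is a GRing.unit) = zunit x.
Proof. by []. Qed.

Lemma zval_int p (z : int) : zval (z%:~R : Zloc p) = z%:~R.
Proof. have := rmorph_int (val : Zloc p -> rat) z. by []. Qed.

Section PartC.
Variables (p : nat) (q : int).
Hypothesis pr : prime p.
Hypothesis podd : odd p.
Hypothesis prim : primitive_mod q (p ^ 2).

Lemma q_unit : (q%:~R : Zloc p) \is a GRing.unit.
Proof.
rewrite zunitE /zunit zval_int numq_int intr_eq0.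
have := @q_cop p q prim; rewrite coprime_sym => ->; rewrite andbT.
apply/eqP => q0; move: (@q_cop p q prim); rewrite q0 /= /coprime gcd0n => /eqP p1.
by move: (prime_gt1 pr); rewrite p1.
Qed.

Lemma fermat_m m : (p%:Z %| q ^+ (p.-1 * m) - 1)%Z.
Proof.
have h := @pow_lift p q pr prim 0; rewrite expn0 muln1 expr1 in h.
rewrite exprM -(expr1n int m) subrXX; exact: dvdz_mulr.
Qed.

Lemma qi_red i : exists d : Zloc p, qi p q i = (q ^+ ee p i)%:~R + p%:R * d.
Proof.
rewrite /qi /ee; set qq := (q%:~R : Zloc p).
case: (boolP (odd i)) => oi.
  rewrite -signr_odd oi expr1 mulN1r -invr_expz /=.
  set m := i./2.
  have [t ht] : exists t : int, q ^+ (p.-1 * m) - 1 = t * p%:Z.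
    by exists ((q ^+ (p.-1 * m) - 1) %/ p)%Z; rewrite divzK // fermat_m.
  have E : qq ^+ (m * p.-1) = 1 + t%:~R * p%:R.
    have := congr1 (fun z : int => (z%:~R : Zloc p)) ht.
    rewrite /= rmorphB rmorphXn rmorph1 rmorphM /= mulnC => <-.
    by rewrite addrC subrK.
  have uu : qq ^+ m \is a GRing.unit by rewrite unitrX // q_unit.
  exists (- ((qq ^+ m)^-1 * t%:~R)).
  rewrite rmorphXn /= -/qq.
  have -> : qq ^+ (m * (p - 2)) = qq ^+ (m * p.-1) * (qq ^+ m)^-1.
    apply: (mulIr uu); rewrite -mulrA mulVr // mulr1 -exprD.
    congr (qq ^+ _); have := @p_ge3 p pr podd; lia.
  rewrite E; ring.
rewrite -signr_odd (negbTE oi) expr0 mul1r /=.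
by exists 0; rewrite mulr0 addr0 rmorphXn.
Qed.

End PartC.

Section PartB.
Variables (p : nat) (q : int) (M : lmodType (Zloc p)) (Psi : Zloc p -> M -> M) (x : M).
Hypothesis act : Rmodule_action Psi.
Hypothesis qu : (q%:~R : Zloc p) \is a GRing.unit.
Hypothesis pr : prime p.
Hypothesis podd : odd p.
Hypothesis prim : primitive_mod q (p ^ 2).
Hypothesis fac : factors_Rx Psi x.

Lemma Psi_lin j : j \is a GRing.unit -> forall a y z, Psi j (a *: y + z) = a *: Psi j y + Psi j z.
Proof. by case: act => h _ _; apply: h. Qed.

Lemma Psi0 j : j \is a GRing.unit -> Psi j 0 = 0.
Proof.
move=> u; have := Psi_lin u 1 0 0; rewrite !scale1r addr0.
by rewrite -[X in X = _]addr0 => /addrI /esym.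
Qed.

Lemma PsiD j : j \is a GRing.unit -> forall y z, Psi j (y + z) = Psi j y + Psi j z.
Proof. by move=> u y z; have h := Psi_lin u 1 y z; rewrite !scale1r in h. Qed.

Lemma PsiZ j : j \is a GRing.unit -> forall a y, Psi j (a *: y) = a *: Psi j y.
Proof. by move=> u a y; have h := Psi_lin u a y 0; rewrite (Psi0 u) !addr0 in h. Qed.

Lemma Psi1 y : Psi 1 y = y.
Proof. by case: act. Qed.

Lemma PsiM j k : j \is a GRing.unit -> k \is a GRing.unit -> forall y, Psi (j * k) y = Psi j (Psi k y).
Proof. by case: act => _ _ h; apply: h. Qed.

Lemma Psi_sum j (I : Type) (r : seq I) (P : pred I) (F : I -> M) :
  j \is a GRing.unit -> Psi j (\sum_(i <- r | P i) F i) = \sum_(i <- r | P i) Psi j (F i).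
Proof. move=> u; apply: big_morph; [exact: PsiD | exact: Psi0]. Qed.

Notation Rx := (Rgen Psi x).

Lemma Rx0 : Rx 0.
Proof. by exists [::]; rewrite big_nil. Qed.

Lemma Rxx : Rx x.
Proof. by exists [:: (1, 1)]; rewrite /= unitr1 big_seq1 scale1r Psi1. Qed.

Lemma RxD y z : Rx y -> Rx z -> Rx (y + z).
Proof.
move=> [s1 [u1 ->]] [s2 [u2 ->]]; exists (s1 ++ s2).
by rewrite all_cat u1 u2 big_cat.
Qed.

Lemma RxZ a y : Rx y -> Rx (a *: y).
Proof.
move=> [s [u ->]]; exists [seq (a * c.1, c.2) | c <- s]; split.
  by rewrite all_map; apply: sub_all u => c.
by rewrite big_map scaler_sumr; apply: eq_bigr => c _; rewrite scalerA.
Qed.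

Lemma RxN y : Rx y -> Rx (- y).
Proof. by move=> h; rewrite -scaleN1r; apply: RxZ. Qed.

Lemma RxPsi j y : j \is a GRing.unit -> Rx y -> Rx (Psi j y).
Proof.
move=> uj [s [u ->]]; exists [seq (c.1, j * c.2) | c <- s]; split.
  rewrite all_map; apply/allP => c cs /=; rewrite unitrM uj /=.
  by move/allP: u => /(_ c cs).
rewrite big_map Psi_sum // big_seq [RHS]big_seq; apply: eq_bigr => c cs.
by rewrite PsiZ // PsiM //; move/allP: u => /(_ c cs).
Qed.

Lemma Rx_sum (I : Type) (r : seq I) (P : pred I) (F : I -> M) :
  (forall i, P i -> Rx (F i)) -> Rx (\sum_(i <- r | P i) F i).
Proof. move=> h; apply: big_ind => //; [exact: Rx0 | exact: RxD]. Qed.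

Let T := Psi (q%:~R).

Lemma T_lin a y z : T (a *: y + z) = a *: T y + T z.
Proof. exact: Psi_lin. Qed.
Lemma TD y z : T (y + z) = T y + T z.
Proof. exact: PsiD. Qed.
Lemma TZ a y : T (a *: y) = a *: T y.
Proof. exact: PsiZ. Qed.
Lemma T0 : T 0 = 0.
Proof. exact: Psi0. Qed.
Lemma T_sum (I : Type) (r : seq I) (P : pred I) (F : I -> M) :
  T (\sum_(i <- r | P i) F i) = \sum_(i <- r | P i) T (F i).
Proof. exact: Psi_sum. Qed.

Lemma iterT_lin n a y z : iter n T (a *: y + z) = a *: iter n T y + iter n T z.
Proof. by elim: n => //= n ->; rewrite T_lin. Qed.

Lemma iterT0 n : iter n T 0 = 0.
Proof. by elim: n => //= n ->; rewrite T0. Qed.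

Lemma iterT_Rx n y : Rx y -> Rx (iter n T y).
Proof. by move=> h; elim: n => //= n IH; apply: RxPsi. Qed.

Definition ev (P : {poly int}) (y : M) : M :=
  \sum_(i < size P) (P`_i)%:~R *: iter i T y.

Lemma ev_bound (P : {poly int}) (y : M) (n : nat) : (size P <= n)%N ->
  ev P y = \sum_(i < n) (P`_i)%:~R *: iter i T y.
Proof.
move=> h; rewrite /ev (big_ord_widen n (fun i => (P`_i)%:~R *: iter i T y) h).
rewrite big_mkcond; apply: eq_bigr => i _; case: ifP => hi; first by [].
rewrite nth_default; last by rewrite leqNgt hi.
by rewrite mulr0z scale0r.
Qed.

Lemma ev0 y : ev 0 y = 0.
Proof. by rewrite /ev size_poly0 big_ord0. Qed.

Lemma ev_add P Q y : ev (P + Q) y = ev P y + ev Q y.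
Proof.
rewrite !(@ev_bound _ y (maxn (size P) (size Q))) ?leq_maxl ?leq_maxr ?size_polyD //.
by rewrite -big_split; apply: eq_bigr => i _; rewrite coefD rmorphD scalerDl.
Qed.

Lemma ev_opp P y : ev (- P) y = - ev P y.
Proof.
rewrite /ev size_polyN -sumrN; apply: eq_bigr => i _.
by rewrite coefN rmorphN scaleNr.
Qed.

Lemma ev_C c y : ev c%:P y = c%:~R *: y.
Proof.
by rewrite (@ev_bound _ y _ (size_polyC_leq1 c)) big_ord1 coefC.
Qed.

Lemma ev_mulX P y : ev (P * 'X) y = ev P (T y).
Proof.
have [->|P0] := eqVneq P 0; first by rewrite mul0r !ev0.
rewrite /ev size_mulX // big_ord_recl coefMX /= rmorph0 scale0r add0r.
by apply: eq_bigr => i _; rewrite coefMX /= -iterSr.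
Qed.

Lemma T_ev P y : T (ev P y) = ev P (T y).
Proof.
rewrite /ev T_sum; apply: eq_bigr => i _.
by rewrite TZ -iterS iterSr.
Qed.

Lemma ev_CM c Q y : ev (c%:P * Q) y = c%:~R *: ev Q y.
Proof.
have h : (size (c%:P * Q)%R <= size Q)%N.
  have [->|c0] := eqVneq c 0; first by rewrite polyC0 mul0r size_poly0.
  by rewrite size_Cmul.
rewrite (@ev_bound _ y _ h) /ev scaler_sumr; apply: eq_bigr => i _.
by rewrite coefCM rmorphM scalerA.
Qed.

Lemma ev_mul P Q y : ev (P * Q) y = ev P (ev Q y).
Proof.
elim/poly_ind: P y => [|P c IH] y; first by rewrite mul0r !ev0.
rewrite mulrDl -mulrA (mulrC 'X) mulrA ev_add ev_mulX IH ev_CM.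
by rewrite ev_add ev_mulX ev_C T_ev.
Qed.

Lemma ev_1 y : ev 1 y = y.
Proof. by rewrite -polyC1 ev_C scale1r. Qed.

Lemma ev_Xn n y : ev 'X^n y = iter n T y.
Proof.
elim: n y => [|n IH] y; first by rewrite expr0 ev_1.
by rewrite exprSr ev_mulX IH iterSr.
Qed.

Lemma ev_lin P a y z : ev P (a *: y + z) = a *: ev P y + ev P z.
Proof.
rewrite /ev scaler_sumr -big_split; apply: eq_bigr => i _.
by rewrite iterT_lin scalerDr !scalerA mulrC.
Qed.

Lemma ev_Z P a y : ev P (a *: y) = a *: ev P y.
Proof.
rewrite /ev scaler_sumr; apply: eq_bigr => i _.
have := iterT_lin i a y 0; rewrite addr0 iterT0 addr0 => ->.
by rewrite !scalerA mulrC.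
Qed.

Lemma ev_Rx P y : Rx y -> Rx (ev P y).
Proof.
by move=> h; apply: Rx_sum => i _; apply: RxZ; apply: iterT_Rx.
Qed.

Lemma ev_pdiv (P : {poly int}) (y : M) : (forall i, (p%:Z %| P`_i)%Z) -> Rx y ->
  exists w, Rx w /\ ev P y = p%:R *: w.
Proof.
move=> hP hy.
exists (\sum_(i < size P) ((P`_i %/ p)%Z)%:~R *: iter i T y); split.
  by apply: Rx_sum => i _; apply: RxZ; apply: iterT_Rx.
rewrite /ev scaler_sumr; apply: eq_bigr => i _.
by rewrite scalerA -{1}(divzK (hP i)) rmorphM /= mulrC.
Qed.



Lemma ev_X y : ev 'X y = T y.
Proof. by rewrite -['X]mul1r ev_mulX ev_1. Qed.

Lemma aux_id (c d pp qv : Zloc p) (Te Tw e w : M) : qv = c + pp * d ->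
  Te + pp *: Tw - qv *: (e + pp *: w) = (Te - c *: e) + pp *: (Tw - d *: e - qv *: w).
Proof.
move=> ->; rewrite !scalerDr !scalerDl !scalerN !scalerA !opprD !addrA.
rewrite !scalerDr !scalerA opprD !addrA [Te + _ - c *: e]addrAC.
by rewrite [pp * c]mulrC [pp * (pp * d)]mulrC.
Qed.

Lemma Phi_ev n : exists w, Rx w /\ Phi Psi q n x = ev (Pint p q n) x + p%:R *: w.
Proof.
elim: n => [|n [w [hw IH]]].
  by exists 0; split; [exact: Rx0 | rewrite /= scaler0 addr0 ev_1].
have [d hd] := qi_red pr podd prim n.+1.
set e := ev (Pint p q n) x.
have he : Rx e by apply: ev_Rx; exact: Rxx.
exists (T w - d *: e - qi p q n.+1 *: w); split.
  apply: RxD; last by apply: RxN; apply: RxZ.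
  apply: RxD; last by apply: RxN; apply: RxZ.
  exact: RxPsi.
rewrite /= IH -/T -/e TD TZ ev_mul ev_add ev_opp ev_C ev_X.
exact: aux_id.
Qed.

Lemma Psi_exp n y : Psi ((q%:~R : Zloc p) ^+ n) y = iter n T y.
Proof.
elim: n y => [|n IH] y; first by rewrite expr0 Psi1.
by rewrite exprS PsiM // ?unitrX // IH -iterS.
Qed.

Lemma mainB : exists k : nat, (1 <= k)%N /\
    forall n : nat, (p ^ k * (p - 1) <= n)%N ->
      exists w : M, Rgen Psi x w /\ Phi Psi q n x = p%:R *: w.
Proof.
have [k0 hk] := @fac 1%N (leqnn 1).
exists k0.+1; split => // n hn.
have [A hA] := partA pr podd prim hn.
set N := (p ^ k0 * (p - 1))%N.
have [w0 [hw0 e0]] : exists w0, Rx w0 /\ iter N T x - x = p%:R *: w0.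
  have [t ht] : exists t : int, q ^+ N - 1 = t * (p%:Z ^+ k0).
    exists ((q ^+ N - 1) %/ (p%:Z ^+ k0))%Z; rewrite divzK //.
    have h := pow_lift pr prim k0.
    rewrite /N subn1 mulnC; apply: dvdz_trans h; rewrite exprS.
    exact: dvdz_mull (dvdzz _).
  have hc : exists c : Zloc p, (q%:~R : Zloc p) ^+ N - 1 = (p ^ k0)%:R * c.
    exists (t%:~R); have := congr1 (fun z : int => (z%:~R : Zloc p)) ht.
    by rewrite /= rmorphB rmorphXn rmorph1 rmorphM rmorphXn /= natrX mulrC.
  have [w [hw ew]] := hk _ 1 (unitrX N qu) (unitr1 _) hc x Rxx.
  by exists w; split => //; rewrite -Psi_exp -[X in _ - X]Psi1 ew expn1.
have [w1 [hw1 e1]] := Phi_ev n.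
have [w2 [hw2 e2]] := ev_pdiv hA Rxx.
exists (ev A w0 + w2 + w1); split.
  by apply: RxD => //; apply: RxD => //; apply: ev_Rx.
rewrite e1.
have -> : ev (Pint p q n) x = ev (A * ('X^N - 1)) x + ev (Pint p q n - A * ('X^N - 1)) x.
  by rewrite -ev_add addrC subrK.
rewrite e2 ev_mul ev_add ev_opp ev_1 ev_Xn e0 ev_Z.
by rewrite !scalerDr.
Qed.

End PartB.

Unset Implicit Arguments.

Theorem lemma4p3 (p : nat) (q : int) (M : lmodType (Zloc p))
    (Psi : Zloc p -> M -> M) (x : M) :
  prime p -> odd p -> primitive_mod q (p ^ 2) -> bousfield Psi ->
  exists k : nat, (1 <= k)%N /\
    forall n : nat, (p ^ k * (p - 1) <= n)%N ->
      exists w : M, Rgen Psi x w /\ Phi Psi q n x = p%:R *: w.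
Proof.
move=> pr podd prim [act hx].
have [_ _ fac] := hx x.
by apply: mainB => //; apply: q_unit.
Qed.
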